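(* Let $\mathbf{x}$ be a probability vector for $S$ and define $W_{\rm for}=\inf\{W\in\mathbb{R}:\ \mathbf{g}\otimes(0,1)\succ_g\mathbf{x}\otimes(1,0)\text{ with respect to }H_{SW}(W)\}$. Then the infimum is attained and $$W_{\rm for}=kT\log\Big(Z_S\max_i x_ie^{\beta E_i}\Big)=kT\log\max_i\frac{x_i}{g_i}.$$
   Context: $S$ has Hamiltonian $H_S=\sum_{i=1}^nE_i|i\rangle\langle i|$, $\beta=1/(kT)>0$, $Z_S=\sum_ie^{-\beta E_i}$, Gibbs vector $g_i=e^{-\beta E_i}/Z_S$. The battery is a two-level system with Hamiltonian $W|1\rangle\langle1|$ and $H_{SW}(W)=H_S\otimes\mathbb{I}+\mathbb{I}\otimes W|1\rangle\langle1|$; $\mathbf{x}\otimes(1,0)$ denotes the product distribution with battery in $|0\rangle$, and $\mathbf{g}\otimes(0,1)$ with battery in $|1\rangle$. Thermo-majorisation for a Hamiltonian $H$ with eigenvalues $\epsilon_1,\dots,\epsilon_m$ and $Z=\sum_je^{-\beta\epsilon_j}$: for a probability vector $\mathbf{u}$ let $\pi$ order $u_{\pi(1)}e^{\beta\epsilon_{\pi(1)}}\ge\dots\ge u_{\pi(m)}e^{\beta\epsilon_{\pi(m)}}$; the curve $T(\mathbf{u})$ is the piecewise linear function on $[0,Z]$ joining the origin and $\big(\sum_{j\le k}e^{-\beta\epsilon_{\pi(j)}},\sum_{j\le k}u_{\pi(j)}\big)$, $k=1,\dots,m$; $\mathbf{u}\succ_g\mathbf{v}$ iff $T(\mathbf{u})\ge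 T(\mathbf{v})$ pointwise. *)

(* Defs.v *)
From Stdlib Require Import Reals Lra Lia List.
Import ListNotations.
Open Scope R_scope.

Definition rsum (n : nat) (f : nat -> R) : R :=
  fold_right Rplus 0 (map f (seq 0 n)).
(* max_{i<n} f i (meaningful for n >= 1). *)
Definition rmaxn (n : nat) (f : nat -> R) : R :=
  fold_right Rmax (f 0%nat) (map f (seq 0 n)).

Definition partfn (beta : R) (m : nat) (eps : nat -> R) : R :=
  rsum m (fun j => exp (- (beta * eps j))).

Definition is_perm (m : nat) (p : nat -> nat) : Prop :=
  (forall i, (i < m)%nat -> (p i < m)%nat) /\
  (forall i j, (i < m)%nat -> (j < m)%nat -> p i = p j -> i = j).

Definition gsort (beta : R) (m : nat) (eps u : nat -> R) (p : nat -> nat) : Prop :=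
  is_perm m p /\
  (forall j k, (j < k)%nat -> (k < m)%nat ->
     u (p k) * exp (beta * eps (p k)) <= u (p j) * exp (beta * eps (p j))).

(* Elbow points of the thermo-majorisation curve. *)
Definition Xpt (beta : R) (eps : nat -> R) (p : nat -> nat) (k : nat) : R :=
  rsum k (fun j => exp (- (beta * eps (p j)))).
Definition Ypt (u : nat -> R) (p : nat -> nat) (k : nat) : R :=
  rsum k (fun j => u (p j)).

Definition curve_val (beta : R) (m : nat) (eps u : nat -> R) (p : nat -> nat)
  (t y : R) : Prop :=
  exists k, (k < m)%nat /\
    Xpt beta eps p k <= t <= Xpt beta eps p (S k) /\
    y = Ypt u p k + (t - Xpt beta eps p k) *
        ((Ypt u p (S k) - Ypt u p k) / (Xpt beta eps p (S k) - Xpt beta eps p k)).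

Definition thermo_maj (beta : R) (m : nat) (eps u v : nat -> R) : Prop :=
  forall pu pv, gsort beta m eps u pu -> gsort beta m eps v pv ->
  forall t y1 y2, 0 <= t <= partfn beta m eps ->
    curve_val beta m eps u pu t y1 -> curve_val beta m eps v pv t y2 -> y2 <= y1.

(* Joint system S (x) battery: basis |i>|b> encoded as index i + n*b, b in {0,1}.
   Eigenvalues of H_SW(W) = H_S (x) I + I (x) W|1><1|. *)
Definition HSW (n : nat) (E : nat -> R) (W : R) (k : nat) : R :=
  if (k <? n)%nat then E k else E (k - n)%nat + W.
(* x (x) (1,0) : battery in |0>. *)
Definition tens0 (n : nat) (x : nat -> R) (k : nat) : R :=
  if (k <? n)%nat then x k else 0.
(* g (x) (0,1) : battery in |1>. *)
Definition tens1 (n : nat) (g : nat -> R) (k : nat) : R :=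
  if (k <? n)%nat then 0 else g (k - n)%nat.

Definition gibbs (beta : R) (n : nat) (E : nat -> R) (i : nat) : R :=
  exp (- (beta * E i)) / partfn beta n E.

(* Main.v *)
Require Import Defs.
From Stdlib Require Import Reals Lra Lia List Permutation Classical.
Import ListNotations.
Open Scope R_scope.
Lemma rsum_0 f : rsum 0 f = 0.
Proof. reflexivity. Qed.

Lemma rsum_S k f : rsum (S k) f = rsum k f + f k.
Proof.
  unfold rsum. rewrite seq_S, map_app, fold_right_app. simpl.
  generalize (map f (seq 0 k)). intro l. induction l; simpl; [ring|]. rewrite IHl. ring.
Qed.

Lemma rsum_ext k f g : (forall j, (j < k)%nat -> f j = g j) -> rsum k f = rsum k g.
Proof.
  induction k; intro H; [reflexivity|]. rewrite !rsum_S, IHk, H; auto; intros; apply H; lia.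
Qed.

Lemma rsum_le k f g : (forall j, (j < k)%nat -> f j <= g j) -> rsum k f <= rsum k g.
Proof.
  induction k; intro H; [rewrite !rsum_0; lra|]. rewrite !rsum_S.
  assert (rsum k f <= rsum k g) by (apply IHk; intros; apply H; lia).
  assert (f k <= g k) by (apply H; lia). lra.
Qed.

Lemma rsum_scal k c f : rsum k (fun j => c * f j) = c * rsum k f.
Proof. induction k; [rewrite !rsum_0; ring|]. rewrite !rsum_S, IHk. ring. Qed.

Lemma rsum_mono k m f : (k <= m)%nat -> (forall j, (k <= j < m)%nat -> 0 <= f j) ->
  rsum k f <= rsum m f.
Proof.
  intros Hkm. induction m; intro H.
  - replace k with 0%nat by lia. lra.
  - destruct (Nat.eq_dec k (S m)) as [->|Hne]; [lra|].
    rewrite rsum_S. assert (rsum k f <= rsum m f) by (apply IHm; [lia| intros; apply H; lia]).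
    assert (0 <= f m) by (apply H; lia). lra.
Qed.

Lemma rsum_zero_tail k m f : (k <= m)%nat -> (forall j, (k <= j < m)%nat -> f j = 0) ->
  rsum m f = rsum k f.
Proof.
  intros Hkm. induction m; intro H.
  - replace k with 0%nat by lia. reflexivity.
  - destruct (Nat.eq_dec k (S m)) as [->|Hne]; [reflexivity|].
    rewrite rsum_S, IHm; [|lia|intros; apply H; lia]. rewrite (H m); [ring|lia].
Qed.

Lemma rsum_nonneg k f : (forall j, (j < k)%nat -> 0 <= f j) -> 0 <= rsum k f.
Proof. intro H. rewrite <- (rsum_0 f). apply rsum_mono; [lia|]. intros; apply H; lia. Qed.

Lemma rsum_term m f a : (a < m)%nat -> (forall j, (j < m)%nat -> 0 <= f j) -> f a <= rsum m f.
Proof.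
  intros Ha H. assert (rsum (S a) f <= rsum m f) by (apply rsum_mono; [lia|intros; apply H; lia]).
  rewrite rsum_S in H0. assert (0 <= rsum a f) by (apply rsum_nonneg; intros; apply H; lia). lra.
Qed.

Lemma rsum_add a b f : rsum (a + b) f = rsum a f + rsum b (fun j => f (a + j)%nat).
Proof.
  induction b. - rewrite Nat.add_0_r, rsum_0. ring.
  - rewrite Nat.add_succ_r, !rsum_S, IHb. ring.
Qed.

Lemma fold_perm (l l' : list R) : Permutation l l' -> fold_right Rplus 0 l = fold_right Rplus 0 l'.
Proof. induction 1; simpl; lra. Qed.

Lemma rsum_perm m p f : is_perm m p -> rsum m (fun j => f (p j)) = rsum m f.
Proof.
  intros [Hb Hi]. unfold rsum. rewrite <- (map_map p f). apply fold_perm, Permutation_map.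
  assert (ND : NoDup (map p (seq 0 m))).
  { apply NoDup_map_NoDup_ForallPairs; [|apply seq_NoDup].
    intros a b Ha Hb' E. apply in_seq in Ha, Hb'. apply Hi; lia. }
  assert (Inc : incl (map p (seq 0 m)) (seq 0 m)).
  { intros y Hy. apply in_map_iff in Hy as [a [<- Ha]]. apply in_seq in Ha. apply in_seq.
    specialize (Hb a). lia. }
  apply NoDup_Permutation; auto. apply seq_NoDup.
  intro y; split; [apply Inc|]. apply NoDup_length_incl; auto.
  rewrite length_map. lia.
Qed.

Lemma fold_max_ge (l : list R) d : d <= fold_right Rmax d l /\ (forall y, In y l -> y <= fold_right Rmax d l).
Proof.
  induction l; simpl. - split; [lra| intros y []].
  - destruct IHl as [H1 H2]. split.
    + eapply Rle_trans; [apply H1| apply Rmax_r].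
    + intros y [<-|Hy]; [apply Rmax_l|]. eapply Rle_trans; [apply H2, Hy|apply Rmax_r].
Qed.

Lemma rmaxn_ge n f i : (i < n)%nat -> f i <= rmaxn n f.
Proof.
  intro Hi. unfold rmaxn. apply (proj2 (fold_max_ge _ _)). apply in_map, in_seq. lia.
Qed.

Lemma fold_max_att (l : list R) d : fold_right Rmax d l = d \/ In (fold_right Rmax d l) l.
Proof.
  induction l; simpl; [auto|]. destruct (Rle_dec a (fold_right Rmax d l)).
  - rewrite Rmax_right by auto. destruct IHl as [H|H]; [left; exact H| right; right; exact H].
  - rewrite Rmax_left by lra. right; left; reflexivity.
Qed.

Lemma rmaxn_att n f : (1 <= n)%nat -> exists a, (a < n)%nat /\ rmaxn n f = f a.
Proof.
  intro Hn. unfold rmaxn. destruct (fold_max_att (map f (seq 0 n)) (f 0%nat)) as [H|H].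
  - exists 0%nat. split; [lia|auto].
  - apply in_map_iff in H as [a [Ha Ha']]. apply in_seq in Ha'. exists a; split; [lia|auto].
Qed.

Lemma rmaxn_ext n f g : (forall i, f i = g i) -> rmaxn n f = rmaxn n g.
Proof. intro H. unfold rmaxn. rewrite H. f_equal. apply map_ext. auto. Qed.

Lemma rmaxn_scal n c f : 0 <= c -> rmaxn n (fun i => c * f i) = c * rmaxn n f.
Proof.
  intro Hc. unfold rmaxn. rewrite <- map_map. generalize (map f (seq 0 n)). intro l.
  induction l; simpl; [reflexivity|]. rewrite IHl.
  destruct (Rle_dec a (fold_right Rmax (f 0%nat) l)).
  - rewrite !Rmax_right; auto. apply Rmult_le_compat_l; lra.
  - rewrite !Rmax_left; auto; try lra. apply Rmult_le_compat_l; lra.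
Qed.

Lemma argmax m (f : nat -> R) : exists a, (a < S m)%nat /\ forall i, (i < S m)%nat -> f i <= f a.
Proof.
  induction m.
  - exists 0%nat; split; [lia|]. intros i Hi. replace i with 0%nat by lia. lra.
  - destruct IHm as [a [Ha H]]. destruct (Rle_dec (f (S m)) (f a)).
    + exists a; split; [lia|]. intros i Hi. destruct (Nat.eq_dec i (S m)) as [->|]; auto. apply H; lia.
    + exists (S m); split; [lia|]. intros i Hi. destruct (Nat.eq_dec i (S m)) as [->|]; [lra|].
      specialize (H i ltac:(lia)). lra.
Qed.

Lemma sort_exists m (f : nat -> R) : exists p, is_perm m p /\
  (forall j k, (j < k)%nat -> (k < m)%nat -> f (p k) <= f (p j)) /\
  ((0 < m)%nat -> forall i, (i < m)%nat -> f i <= f (p 0%nat)).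
Proof.
  revert f. induction m; intro f.
  - exists (fun i => i). repeat split; intros; lia.
  - destruct (argmax m f) as [a [Ha Hmax]].
    set (tau := fun i => if Nat.eqb i a then m else if Nat.eqb i m then a else i).
    assert (Htt : forall i, tau (tau i) = i).
    { intro i. unfold tau.
      destruct (Nat.eqb_spec i a); destruct (Nat.eqb_spec i m);
      repeat match goal with |- context [Nat.eqb ?x ?y] => destruct (Nat.eqb_spec x y) end; lia. }
    assert (Htb : forall i, (i < S m)%nat -> (tau i < S m)%nat).
    { intros i Hi. unfold tau. destruct (Nat.eqb_spec i a); destruct (Nat.eqb_spec i m); lia. }
    destruct (IHm (fun i => f (tau i))) as [p [[Hpb Hpi] [Hs _]]].
    exists (fun j => match j with 0%nat => a | S j' => tau (p j') end).
    split; [split|split].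
    + intros [|i] Hi; auto. apply Htb. specialize (Hpb i ltac:(lia)). lia.
    + intros [|i] [|j] Hi Hj E; auto.
      * exfalso. assert (tau a = p j) by (rewrite E, Htt; auto). unfold tau in H.
        rewrite Nat.eqb_refl in H. specialize (Hpb j ltac:(lia)). lia.
      * exfalso. assert (tau a = p i) by (rewrite <- E, Htt; auto). unfold tau in H.
        rewrite Nat.eqb_refl in H. specialize (Hpb i ltac:(lia)). lia.
      * f_equal. apply Hpi; try lia. rewrite <- (Htt (p i)), <- (Htt (p j)), E. auto.
    + intros [|j] [|k] Hjk Hk; try lia.
      * apply Hmax. apply Htb. specialize (Hpb k ltac:(lia)). lia.
      * apply Hs; lia.
    + intros _ i Hi. apply Hmax; auto.
Qed.

Lemma expinv a : exp a * exp (- a) = 1.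
Proof. rewrite exp_Ropp. field. apply Rgt_not_eq, exp_pos. Qed.

Lemma decomp u (z : R) : u = (u * exp z) * exp (- z).
Proof. rewrite Rmult_assoc, expinv. ring. Qed.

Lemma Xdiff beta eps p k : Xpt beta eps p (S k) - Xpt beta eps p k = exp (- (beta * eps (p k))).
Proof. unfold Xpt. rewrite rsum_S. ring. Qed.
Lemma Ydiff u p k : Ypt u p (S k) - Ypt u p k = u (p k).
Proof. unfold Ypt. rewrite rsum_S. ring. Qed.

Lemma slope beta eps u p k :
  (Ypt u p (S k) - Ypt u p k) / (Xpt beta eps p (S k) - Xpt beta eps p k)
  = u (p k) * exp (beta * eps (p k)).
Proof.
  rewrite Xdiff, Ydiff, exp_Ropp. field. apply Rgt_not_eq, exp_pos.
Qed.

Lemma curve_upper beta m eps v p t y M :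
  is_perm m p -> (forall k, (k < m)%nat -> 0 <= v k) ->
  (forall k, (k < m)%nat -> v k * exp (beta * eps k) <= M) ->
  curve_val beta m eps v p t y -> y <= M * t /\ y <= rsum m v.
Proof.
  intros Hp Hv HM [k [Hk [[Ht1 Ht2] Hy]]]. rewrite slope in Hy.
  destruct Hp as [Hpb Hpi].
  assert (Hs0 : 0 <= v (p k) * exp (beta * eps (p k))).
  { apply Rmult_le_pos; [apply Hv, Hpb; lia| left; apply exp_pos]. }
  assert (HsM : v (p k) * exp (beta * eps (p k)) <= M) by (apply HM, Hpb; lia).
  split.
  - assert (HY : Ypt v p k <= M * Xpt beta eps p k).
    { unfold Ypt, Xpt. rewrite <- rsum_scal. apply rsum_le. intros j Hj.
      rewrite (decomp (v (p j)) (beta * eps (p j))).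
      apply Rmult_le_compat_r; [left; apply exp_pos| apply HM, Hpb; lia]. }
    rewrite Hy. assert ((t - Xpt beta eps p k) * (v (p k) * exp (beta * eps (p k)))
       <= (t - Xpt beta eps p k) * M) by (apply Rmult_le_compat_l; lra). lra.
  - assert (Hd := Xdiff beta eps p k). assert (Hd2 := Ydiff v p k).
    assert (E1 : (t - Xpt beta eps p k) * (v (p k) * exp (beta * eps (p k))) <=
        exp (- (beta * eps (p k))) * (v (p k) * exp (beta * eps (p k)))).
    { apply Rmult_le_compat_r; lra. }
    replace (exp (- (beta * eps (p k))) * (v (p k) * exp (beta * eps (p k)))) with
      (v (p k) * (exp (beta * eps (p k)) * exp (- (beta * eps (p k))))) in E1 by ring.
    rewrite expinv, Rmult_1_r in E1.
    assert (HYm : Ypt v p (S k) <= Ypt v p m).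
    { unfold Ypt. apply rsum_mono; [lia|]. intros; apply Hv, Hpb; lia. }
    assert (Ypt v p m = rsum m v) by (apply rsum_perm; split; auto).
    lra.
Qed.

Lemma curve_lower beta m eps u p t y M :
  0 < M -> gsort beta m eps u p ->
  (forall k, (k < m)%nat -> u k * exp (beta * eps k) = 0 \/ u k * exp (beta * eps k) = M) ->
  curve_val beta m eps u p t y -> y = M * t \/ y = rsum m u.
Proof.
  intros HM [Hp Hs] H01 [k [Hk [[Ht1 Ht2] Hy]]]. rewrite slope in Hy.
  destruct Hp as [Hpb Hpi].
  destruct (H01 (p k) ltac:(apply Hpb; lia)) as [H0|H1].
  - right. rewrite H0 in Hy.
    assert (Hz : forall j, (k <= j < m)%nat -> u (p j) = 0).
    { intros j Hj. assert (u (p j) * exp (beta * eps (p j)) <= 0).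
      { destruct (Nat.eq_dec j k) as [->|]; [lra|]. rewrite <- H0. apply Hs; lia. }
      destruct (H01 (p j) ltac:(apply Hpb; lia)) as [E|E]; [|lra].
      rewrite (decomp (u (p j)) (beta * eps (p j))), E. ring. }
    assert (Ypt u p m = Ypt u p k) by (apply rsum_zero_tail; auto; lia).
    assert (Ypt u p m = rsum m u) by (apply rsum_perm; split; auto).
    lra.
  - left. rewrite H1 in Hy.
    assert (HY : Ypt u p k = M * Xpt beta eps p k).
    { unfold Ypt, Xpt. rewrite <- rsum_scal. apply rsum_ext. intros j Hj.
      assert (M <= u (p j) * exp (beta * eps (p j))) by (rewrite <- H1; apply Hs; lia).
      destruct (H01 (p j) ltac:(apply Hpb; lia)) as [E|E]; [lra|].
      rewrite (decomp (u (p j)) (beta * eps (p j))), E. ring. }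
    rewrite Hy, HY. ring.
Qed.

Lemma nec beta m eps u v pu pv c d :
  thermo_maj beta m eps u v -> gsort beta m eps u pu -> gsort beta m eps v pv ->
  (0 < m)%nat -> u (pu 0%nat) * exp (beta * eps (pu 0%nat)) = c ->
  v (pv 0%nat) * exp (beta * eps (pv 0%nat)) = d -> d <= c.
Proof.
  intros HT Hu Hv Hm Hc Hd.
  set (t := Rmin (exp (- (beta * eps (pu 0%nat)))) (exp (- (beta * eps (pv 0%nat))))).
  assert (Ht0 : 0 < t) by (unfold t; apply Rmin_pos; apply exp_pos).
  assert (Hx0 : forall p, Xpt beta eps p 0 = 0) by reflexivity.
  assert (Hx1 : forall p, Xpt beta eps p 1 = exp (- (beta * eps (p 0%nat)))).
  { intro p. unfold Xpt. rewrite rsum_S, rsum_0. ring. }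
  assert (Hy0 : forall w p, Ypt w p 0 = 0) by reflexivity.
  assert (HZ : t <= partfn beta m eps).
  { eapply Rle_trans; [apply Rmin_r|]. unfold partfn.
    apply (rsum_term m (fun j => exp (- (beta * eps j)))).
    - destruct Hv as [[Hb _] _]; apply Hb; auto.
    - intros; left; apply exp_pos. }
  assert (t * d <= t * c).
  { apply (HT pu pv Hu Hv t); [lra| |].
    - exists 0%nat. split; [auto|]. split; [rewrite Hx0, Hx1; split; [lra|apply Rmin_l]|].
      rewrite slope, Hc, Hy0, Hx0. ring.
    - exists 0%nat. split; [auto|]. split; [rewrite Hx0, Hx1; split; [lra|apply Rmin_r]|].
      rewrite slope, Hd, Hy0, Hx0. ring. }
  apply Rmult_le_reg_l with t; auto.
Qed.

Lemma rsum_tens0 n x : rsum (2 * n) (tens0 n x) = rsum n x.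
Proof.
  replace (2 * n)%nat with (n + n)%nat by lia. rewrite rsum_add.
  rewrite (rsum_ext n (fun j => tens0 n x (n + j)) (fun _ => 0 * 0)).
  - rewrite rsum_scal, Rmult_0_l, Rplus_0_r. apply rsum_ext. intros j Hj.
    unfold tens0. destruct (Nat.ltb_spec j n); [auto|lia].
  - intros j Hj. unfold tens0. destruct (Nat.ltb_spec (n + j) n); [lia|ring].
Qed.

Lemma rsum_tens1 n g : rsum (2 * n) (tens1 n g) = rsum n g.
Proof.
  replace (2 * n)%nat with (n + n)%nat by lia. rewrite rsum_add.
  rewrite (rsum_ext n (tens1 n g) (fun _ => 0 * 0)).
  - rewrite rsum_scal, Rmult_0_l, Rplus_0_l. apply rsum_ext. intros j Hj.
    unfold tens1. destruct (Nat.ltb_spec (n + j) n); [lia|]. f_equal; lia.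
  - intros j Hj. unfold tens1. destruct (Nat.ltb_spec j n); [ring|lia].
Qed.

Lemma Zpos beta n E : (1 <= n)%nat -> 0 < partfn beta n E.
Proof.
  intro Hn. unfold partfn. destruct n; [lia|]. rewrite rsum_S.
  assert (0 <= rsum n (fun j => exp (- (beta * E j)))) by
    (apply rsum_nonneg; intros; left; apply exp_pos).
  assert (0 < exp (- (beta * E n))) by apply exp_pos. lra.
Qed.

Lemma gibbs_sum beta n E : (1 <= n)%nat -> rsum n (gibbs beta n E) = 1.
Proof.
  intro Hn. assert (HZ := Zpos beta n E Hn).
  rewrite (rsum_ext n _ (fun j => / partfn beta n E * exp (- (beta * E j)))).
  - rewrite rsum_scal. fold (partfn beta n E). field. lra.
  - intros. unfold gibbs. field. lra.
Qed.

Lemma ru_val n E beta W M k : (1 <= n)%nat -> exp (beta * W) = partfn beta n E * M ->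
  (k < 2 * n)%nat ->
  tens1 n (gibbs beta n E) k * exp (beta * HSW n E W k) = if (k <? n)%nat then 0 else M.
Proof.
  intros Hn HW Hk. assert (HZ := Zpos beta n E Hn). unfold tens1, HSW.
  destruct (k <? n)%nat; [ring|]. unfold gibbs.
  replace (beta * (E (k - n)%nat + W)) with (beta * E (k - n)%nat + beta * W) by ring.
  rewrite exp_plus, HW, exp_Ropp. field. repeat split; (lra || (apply Rgt_not_eq, exp_pos)).
Qed.

Lemma suff n E beta x W M : 0 < beta -> (1 <= n)%nat ->
  (forall i, (i < n)%nat -> 0 <= x i) -> rsum n x = 1 -> 0 < M ->
  (forall i, (i < n)%nat -> x i * exp (beta * E i) <= M) ->
  exp (beta * W) = partfn beta n E * M ->
  thermo_maj beta (2 * n) (HSW n E W) (tens1 n (gibbs beta n E)) (tens0 n x).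
Proof.
  intros Hb Hn Hx Hs HM HxM HW pu pv Hu Hv t y1 y2 _ Cu Cv.
  destruct (curve_upper beta (2 * n) (HSW n E W) (tens0 n x) pv t y2 M) as [U1 U2]; auto.
  - destruct Hv; auto.
  - intros k Hk. unfold tens0. destruct (Nat.ltb_spec k n); [apply Hx; auto|lra].
  - intros k Hk. unfold tens0, HSW. destruct (Nat.ltb_spec k n); [apply HxM; auto|lra].
  - rewrite rsum_tens0, Hs in U2.
    destruct (curve_lower beta (2 * n) (HSW n E W) (tens1 n (gibbs beta n E)) pu t y1 M)
      as [L|L]; auto.
    + intros k Hk. rewrite (ru_val n E beta W M k); auto. destruct (k <? n)%nat; auto.
    + lra.
    + rewrite rsum_tens1, gibbs_sum in L; auto. lra.
Qed.

Lemma pos_exists n x : rsum n x = 1 -> (forall i, (i < n)%nat -> 0 <= x i) ->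
  exists i, (i < n)%nat /\ 0 < x i.
Proof.
  intros Hs Hx. apply NNPP. intro H.
  assert (rsum n x <= rsum n (fun _ => 0 * 0)).
  { apply rsum_le. intros j Hj. destruct (Rlt_le_dec 0 (x j)); [|lra].
    exfalso; apply H; eauto. }
  rewrite rsum_scal in H0. lra.
Qed.

Theorem mainTheorem9 (n : nat) (E : nat -> R) (beta : R) (x : nat -> R) :
  0 < beta ->
  (forall i, (i < n)%nat -> 0 <= x i) ->
  rsum n x = 1 ->
  let Wfor := (1 / beta) *
      ln (partfn beta n E * rmaxn n (fun i => x i * exp (beta * E i))) in
  let Sset := fun W : R =>
      thermo_maj beta (2 * n) (HSW n E W) (tens1 n (gibbs beta n E)) (tens0 n x) in
  Sset Wfor /\ (forall W, Sset W -> Wfor <= W) /\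
  Wfor = (1 / beta) * ln (rmaxn n (fun i => x i / gibbs beta n E i)).
Proof.
  intros Hb Hx Hs Wfor Sset.
  destruct (pos_exists n x Hs Hx) as [i0 [Hi0 Hxi0]].
  assert (Hn : (1 <= n)%nat) by lia.
  set (M := rmaxn n (fun i => x i * exp (beta * E i))).
  assert (HMge : forall i, (i < n)%nat -> x i * exp (beta * E i) <= M)
    by (intros i Hi; unfold M; apply (rmaxn_ge n (fun i => x i * exp (beta * E i))); auto).
  assert (HM : 0 < M).
  { eapply Rlt_le_trans; [|apply (HMge i0 Hi0)]. apply Rmult_lt_0_compat; auto. apply exp_pos. }
  assert (HZ := Zpos beta n E Hn).
  assert (HZM : 0 < partfn beta n E * M) by (apply Rmult_lt_0_compat; auto).
  split; [|split].
  - apply (suff n E beta x Wfor M); auto. unfold Wfor. fold M.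
    replace (beta * (1 / beta * ln (partfn beta n E * M))) with (ln (partfn beta n E * M))
      by (field; lra). apply exp_ln; auto.
  - intros W HW. unfold Sset in HW.
    set (pu := fun j => if (j <? n)%nat then (j + n)%nat else (j - n)%nat).
    assert (Hpu : gsort beta (2 * n) (HSW n E W) (tens1 n (gibbs beta n E)) pu).
    { assert (HW' : exp (beta * W) = partfn beta n E * (exp (beta * W) / partfn beta n E))
        by (field; lra).
      assert (Hc : 0 < exp (beta * W) / partfn beta n E)
        by (apply Rdiv_lt_0_compat; auto; apply exp_pos).
      split; [split|].
      - intros i Hi. unfold pu. destruct (Nat.ltb_spec i n); lia.
      - intros i j Hi Hj. unfold pu. destruct (Nat.ltb_spec i n); destruct (Nat.ltb_spec j n); lia.
      - intros j k Hjk Hk.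
        assert (Hpb : forall i, (i < 2 * n)%nat -> (pu i < 2 * n)%nat)
          by (intros i Hi; unfold pu; destruct (Nat.ltb_spec i n); lia).
        rewrite !(ru_val n E beta W _ _ Hn HW'); try (apply Hpb; lia).
        unfold pu. destruct (Nat.ltb_spec k n); destruct (Nat.ltb_spec j n); try lia.
        + replace ((k + n <? n)%nat) with false by (symmetry; apply Nat.ltb_ge; lia).
          replace ((j + n <? n)%nat) with false by (symmetry; apply Nat.ltb_ge; lia). lra.
        + replace ((k - n <? n)%nat) with true by (symmetry; apply Nat.ltb_lt; lia).
          replace ((j + n <? n)%nat) with false by (symmetry; apply Nat.ltb_ge; lia). lra.
        + replace ((k - n <? n)%nat) with true by (symmetry; apply Nat.ltb_lt; lia).
          replace ((j - n <? n)%nat) with true by (symmetry; apply Nat.ltb_lt; lia). lra. }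
    destruct (sort_exists (2 * n) (fun k => tens0 n x k * exp (beta * HSW n E W k)))
      as [pv [Hpv [Hsv Hmv]]].
    destruct (rmaxn_att n (fun i => x i * exp (beta * E i)) Hn) as [a [Ha HaM]].
    assert (Hle := nec beta (2 * n) (HSW n E W) _ _ pu pv _ _ HW Hpu (conj Hpv Hsv)
      ltac:(lia) eq_refl eq_refl).
    assert (Hpu0 : tens1 n (gibbs beta n E) (pu 0%nat) * exp (beta * HSW n E W (pu 0%nat))
       = exp (beta * W) / partfn beta n E).
    { rewrite (ru_val n E beta W (exp (beta * W) / partfn beta n E)); auto.
      - unfold pu. destruct (Nat.ltb_spec 0 n); [|lia].
        destruct (Nat.ltb_spec (0 + n) n); [lia|reflexivity].
      - field; lra.
      - unfold pu. destruct (Nat.ltb_spec 0 n); lia. }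
    rewrite Hpu0 in Hle.
    assert (M <= exp (beta * W) / partfn beta n E).
    { eapply Rle_trans; [|apply Hle].
      eapply Rle_trans; [|apply (Hmv ltac:(lia) a ltac:(lia))].
      unfold M. rewrite HaM. unfold tens0, HSW. destruct (Nat.ltb_spec a n); [lra|lia]. }
    assert (partfn beta n E * M <= exp (beta * W)).
    { apply Rmult_le_reg_r with (/ partfn beta n E).
      - apply Rinv_0_lt_compat; auto.
      - replace (partfn beta n E * M * / partfn beta n E) with M by (field; lra). exact H. }
    assert (ln (partfn beta n E * M) <= beta * W).
    { destruct (Req_dec (partfn beta n E * M) (exp (beta * W))) as [E'|E'].
      - rewrite E', ln_exp. lra.
      - left. rewrite <- (ln_exp (beta * W)). apply ln_increasing; auto. lra. }
    unfold Wfor. fold M.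
    apply Rle_trans with (1 / beta * (beta * W)); [|right; field; lra].
    apply Rmult_le_compat_l; auto. unfold Rdiv. rewrite Rmult_1_l. left. apply Rinv_0_lt_compat. auto.
  - unfold Wfor. f_equal. f_equal.
    unfold M. rewrite <- (rmaxn_scal n (partfn beta n E)) by lra. apply rmaxn_ext. intro i. unfold gibbs.
    rewrite exp_Ropp. field. repeat split; (lra || (apply Rgt_not_eq, exp_pos)).
Qed.
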